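(* Let $\mathbb X$ and $\mathbb Y$ be $L$-structures with $|X|=|Y|=\kappa\ge\omega$. Then: (I) The following are equivalent: (a) $\mathbb X\preccurlyeq_c\mathbb Y$; (b) there exists a $\kappa$-closed back and forth system $\Pi\subseteq\mathrm{PC}(\mathbb X,\mathbb Y)$; (c) player II has a winning strategy in the game $G^{\preccurlyeq_c}_\kappa(\mathbb X,\mathbb Y)$. (II) The following are equivalent: (a) $\mathbb X\sim_c\mathbb Y$; (b) there are $\kappa$-closed back and forth systems $\Pi_{\mathbb X,\mathbb Y}\subseteq\mathrm{PC}(\mathbb X,\mathbb Y)$ and $\Pi_{\mathbb Y,\mathbb X}\subseteq\mathrm{PC}(\mathbb Y,\mathbb X)$; (c) player II has winning strategies in both games $G^{\preccurlyeq_c}_\kappa(\mathbb X,\mathbb Y)$ and $G^{\preccurlyeq_c}_\kappa(\mathbb Y,\mathbb X)$.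
   Context: $L=\langle R_i:i\in I\rangle$ is a relational language, $R_i$ of arity $n_i$; for an $L$-structure $\mathbb X$ with domain $X$, $R_i^{\mathbb X}$ is the interpretation of $R_i$. For a map $f$ and tuple $\bar x=\langle x_0,\dots,x_{k-1}\rangle$ write $f\bar x=\langle f(x_0),\dots,f(x_{k-1})\rangle$. A partial condensation from $\mathbb X$ to $\mathbb Y$ is a bijection $f$ from a set $\operatorname{dom}f\subseteq X$ onto a set $\operatorname{ran}f\subseteq Y$ such that for all $i\in I$ and $\bar x\in(\operatorname{dom}f)^{n_i}$, $\bar x\in R_i^{\mathbb X}$ implies $f\bar x\in R_i^{\mathbb Y}$; $\mathrm{PC}(\mathbb X,\mathbb Y)$ is the set of these. A condensation is a partial condensation with domain $X$ and range $Y$ (a bijective homomorphism). $\mathbb X\preccurlyeq_c\mathbb Y$ means there is a condensation from $\mathbb X$ onto $\mathbb Y$; $\mathbb X\sim_c\mathbb Y$ means $\mathbb X\preccurlyeq_c\mathbb Y$ and $\mathbb Y\preccurlyeq_c\mathbb X$. A back and forth system (b.f.s.) is a nonempty $\Pi\subseteq\mathrm{PC}(\mathbb X,\mathbb Y)$ such that (e1) for all $f\in\Pi$ and $x\in X$ there is $g\in\Pi$ with $f\subseteq g$ and $x\in\operatorname{dom}g$, and (e2) for all $f\in\Pi$ and $y\in Y$ there is $g\in\Pi$ with $f\subseteq g$ and $y\in\operatorname{ran}g$. A partial order $\langle P,\le\rangle$ is $\kappa$-closed if for every ordinal $\gamma<\kappa$ and every sequence $\langle p_\alpha:\alpha<\gamma\rangle$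 in $P$ with $p_\beta\le p_\alpha$ whenever $\alpha<\beta<\gamma$, there is $p\in P$ with $p\le p_\alpha$ for all $\alpha<\gamma$. A b.f.s. $\Pi$ is $\kappa$-closed if $\langle\Pi,\supseteq\rangle$ is $\kappa$-closed. For a cardinal $\kappa$, the game $G^{\preccurlyeq_c}_\kappa(\mathbb X,\mathbb Y)$ has steps indexed by $\alpha<\kappa$; at step $\alpha$ player I either chooses $x_\alpha\in X$ and then player II chooses $y_\alpha\in Y$, or player I chooses $y_\alpha\in Y$ and then II chooses $x_\alpha\in X$. Player II wins the play iff $\{\langle x_\alpha,y_\alpha\rangle:\alpha<\kappa\}\in\mathrm{PC}(\mathbb X,\mathbb Y)$; otherwise I wins. A strategy for II determines its move from the sequence of previous moves and I's current choice; it is winning if II wins every play in which it is followed. *)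

(* Defs.v *)
From Stdlib Require Import Classical.
From Stdlib Require Vectors.Fin.

Set Implicit Arguments.

(* A relational language L = <R_i : i in I>, R_i of arity ar i.  An
   L-structure with domain X is given by the interpretations
   RX i : (Fin.t (ar i) -> X) -> Prop  (tuples of length ar i). *)
Definition structure_rel (I : Type) (ar : I -> nat) (X : Type) : Type :=
  forall i : I, (Fin.t (ar i) -> X) -> Prop.

(* A partial map is represented by its graph, a relation X -> Y -> Prop. *)
Definition sub_rel (X Y : Type) (f g : X -> Y -> Prop) : Prop :=
  forall x y, f x y -> g x y.

Definition is_PC (I : Type) (ar : I -> nat) (X Y : Type)
  (RX : structure_rel ar X) (RY : structure_rel ar Y) (f : X -> Y -> Prop) : Prop :=
  (forall x y y', f x y -> f x y' -> y = y') /\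
  (forall x x' y, f x y -> f x' y -> x = x') /\
  (forall (i : I) (xs : Fin.t (ar i) -> X) (ys : Fin.t (ar i) -> Y),
      (forall k, f (xs k) (ys k)) -> RX i xs -> RY i ys).

Definition is_condensation (I : Type) (ar : I -> nat) (X Y : Type)
  (RX : structure_rel ar X) (RY : structure_rel ar Y) (f : X -> Y -> Prop) : Prop :=
  is_PC RX RY f /\ (forall x, exists y, f x y) /\ (forall y, exists x, f x y).

Definition condenses (I : Type) (ar : I -> nat) (X Y : Type)
  (RX : structure_rel ar X) (RY : structure_rel ar Y) : Prop :=
  exists f, is_condensation RX RY f.

Definition cond_equiv (I : Type) (ar : I -> nat) (X Y : Type)
  (RX : structure_rel ar X) (RY : structure_rel ar Y) : Prop :=
  condenses RX RY /\ condenses RY RX.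

Definition is_bfs (I : Type) (ar : I -> nat) (X Y : Type)
  (RX : structure_rel ar X) (RY : structure_rel ar Y)
  (Pi : (X -> Y -> Prop) -> Prop) : Prop :=
  (exists f, Pi f) /\
  (forall f, Pi f -> is_PC RX RY f) /\
  (forall f x, Pi f -> exists g, Pi g /\ sub_rel f g /\ exists y, g x y) /\
  (forall f y, Pi f -> exists g, Pi g /\ sub_rel f g /\ exists x, g x y).

(* The cardinal kappa is represented by a type K with a strict well-order lt
   of order type kappa (an initial ordinal): every proper initial segment has
   strictly smaller cardinality.  kappa >= omega: K is infinite. *)
Definition is_infinite_cardinal (K : Type) (lt : K -> K -> Prop) : Prop :=
  (forall a, ~ lt a a) /\
  (forall a b c, lt a b -> lt b c -> lt a c) /\
  (forall a b, lt a b \/ a = b \/ lt b a) /\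
  well_founded lt /\
  (exists e : nat -> K, forall m n, e m = e n -> m = n) /\
  (forall g : K, ~ exists h : K -> {b : K | lt b g},
       forall a a', h a = h a' -> a = a').

Definition equinumerous (A B : Type) : Prop :=
  exists f : A -> B, (forall a a', f a = f a' -> a = a') /\ (forall b, exists a, f a = b).

(* kappa-closedness of <Pi, ⊇>: ordinals gamma < kappa are the initial
   segments {a | lt a g} of K; p_beta <= p_alpha in <Pi, ⊇> means
   p_alpha ⊆ p_beta. *)
Definition kappa_closed (K : Type) (lt : K -> K -> Prop) (X Y : Type)
  (Pi : (X -> Y -> Prop) -> Prop) : Prop :=
  forall (g : K) (p : K -> X -> Y -> Prop),
    (forall a, lt a g -> Pi (p a)) ->
    (forall a b, lt a b -> lt b g -> sub_rel (p a) (p b)) ->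
    exists q, Pi q /\ forall a, lt a g -> sub_rel (p a) q.

(* A play is a sequence indexed by K whose entry at
   step a is (x_a, y_a, b) where b = true iff player I chose x_a (and II
   answered y_a), b = false iff I chose y_a (and II answered x_a). *)
Definition restrict (K A : Type) (lt : K -> K -> Prop) (p : K -> A) (a : K)
  : {b : K | lt b a} -> A := fun b => p (proj1_sig b).

(* A strategy for II is a pair (sX, sY): at step a, given the previous moves
   (the play restricted to steps < a) and I's current choice, it gives II's move. *)
Definition follows (K : Type) (lt : K -> K -> Prop) (X Y : Type)
  (sX : forall a : K, ({b : K | lt b a} -> X * Y * bool) -> X -> Y)
  (sY : forall a : K, ({b : K | lt b a} -> X * Y * bool) -> Y -> X)
  (p : K -> X * Y * bool) : Prop :=
  forall a : K,
    match p a with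
    | (x, y, true) => y = sX a (restrict lt p a) x
    | (x, y, false) => x = sY a (restrict lt p a) y
    end.

Definition play_rel (K X Y : Type) (p : K -> X * Y * bool) : X -> Y -> Prop :=
  fun x y => exists a, fst (fst (p a)) = x /\ snd (fst (p a)) = y.

Definition II_has_winning_strategy (K : Type) (lt : K -> K -> Prop)
  (I : Type) (ar : I -> nat) (X Y : Type)
  (RX : structure_rel ar X) (RY : structure_rel ar Y) : Prop :=
  exists (sX : forall a : K, ({b : K | lt b a} -> X * Y * bool) -> X -> Y)
         (sY : forall a : K, ({b : K | lt b a} -> X * Y * bool) -> Y -> X),
    forall p : K -> X * Y * bool, follows lt sX sY p -> is_PC RX RY (play_rel p).

(* Main.v *)
Require Import Defs.
From Stdlib Require Import Classical ClassicalEpsilon FunctionalExtensionality Arith Lia.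
From Stdlib Require Vectors.Fin.
From Stdlib Require Import Classical ClassicalEpsilon FunctionalExtensionality Arith Lia.
Set Implicit Arguments.

Lemma wf_min (K : Type) (lt : K -> K -> Prop) (wf : well_founded lt) (P : K -> Prop) :
  (exists a, P a) -> exists a, P a /\ forall b, lt b a -> ~ P b.
Proof.
  intros [a Ha]. apply NNPP. intro Hn.
  assert (forall b, ~ P b) as Hall.
  { intro b. induction (wf b) as [b _ IH]. intro Hb. apply Hn. exists b. split; auto. }
  exact (Hall a Ha).
Qed.

Lemma nomax (K : Type) (lt : K -> K -> Prop) (HK : is_infinite_cardinal lt) :
  forall a, exists b, lt a b.
Proof.
  destruct HK as (irr & tr & tri & wf & [e einj] & seg).
  intro a. apply NNPP. intro Hmax.
  assert (Hlt : forall b, b <> a -> lt b a).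
  { intros b hb. destruct (tri b a) as [h|[h|h]]; auto. contradiction. exfalso; apply Hmax; eauto. }
  assert (Hu : exists u : nat -> K, (forall m n, u m = u n -> m = n) /\ forall n, u n <> a).
  { destruct (classic (exists m, e m = a)) as [[m Hm]|Hm].
    - exists (fun n => e (n + S m)). split.
      + intros x y h. apply einj in h. lia.
      + intros n h. rewrite <- Hm in h. apply einj in h. lia.
    - exists e. split; auto. intros n h. apply Hm; eauto. }
  destruct Hu as [u [uinj ua]].
  set (nf := fun b => epsilon (inhabits 0) (fun n => b = u n)).
  assert (Hnf : forall b, (exists n, b = u n) -> b = u (nf b)).
  { intros b hb. exact (epsilon_spec (inhabits 0) (fun n => b = u n) hb). }
  set (psi := fun b => if excluded_middle_informative (exists n, b = u n) then u (S (nf b))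
                       else if excluded_middle_informative (b = a) then u 0 else b).
  assert (Hpa : forall b, psi b <> a).
  { intro b. unfold psi. destruct (excluded_middle_informative _) as [h|h]; auto.
    destruct (excluded_middle_informative _) as [h'|h']; auto. }
  assert (Hpi : forall b b', psi b = psi b' -> b = b').
  { intros b b'. unfold psi.
    destruct (excluded_middle_informative (exists n, b = u n)) as [h1|h1];
    destruct (excluded_middle_informative (exists n, b' = u n)) as [h2|h2].
    - intro h. apply uinj in h. injection h as h. rewrite (Hnf b h1), (Hnf b' h2), h. reflexivity.
    - destruct (excluded_middle_informative (b' = a)) as [h3|h3].
      + intro h. apply uinj in h. discriminate.
      + intro h. exfalso. apply h2. eauto.
    - destruct (excluded_middle_informative (b = a)) as [h3|h3].
      + intro h. apply uinj in h. discriminate.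
      + intro h. exfalso. apply h1. eauto.
    - destruct (excluded_middle_informative (b = a)) as [h3|h3];
      destruct (excluded_middle_informative (b' = a)) as [h4|h4].
      + congruence.
      + intro h. exfalso. apply h2. eauto.
      + intro h. exfalso. apply h1. eauto.
      + auto. }
  apply (seg a). exists (fun b => exist _ (psi b) (Hlt _ (Hpa b))).
  intros b b' h. apply Hpi. apply (f_equal (@proj1_sig _ _)) in h. exact h.
Qed.

Definition succK (K : Type) (lt : K -> K -> Prop) (k0 : K) (a : K) : K :=
  epsilon (inhabits k0) (fun b => lt a b /\ forall c, lt c b -> ~ lt a c).

Lemma succK_spec (K : Type) (lt : K -> K -> Prop) (HK : is_infinite_cardinal lt) k0 a :
  lt a (succK lt k0 a) /\ forall c, lt c (succK lt k0 a) -> ~ lt a c.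
Proof.
  pose proof (nomax HK) as nm. destruct HK as (irr & tr & tri & wf & _ & _).
  unfold succK. apply epsilon_spec.
  destruct (wf_min wf (fun b => lt a b) (nm a)) as [b [h1 h2]]. eauto.
Qed.

Lemma succK_inj (K : Type) (lt : K -> K -> Prop) (HK : is_infinite_cardinal lt) k0 a b :
  succK lt k0 a = succK lt k0 b -> a = b.
Proof.
  intro h. pose proof (succK_spec HK k0 a) as [a1 a2]. pose proof (succK_spec HK k0 b) as [b1 b2].
  destruct HK as (irr & tr & tri & wf & _ & _).
  destruct (tri a b) as [h'|[h'|h']]; auto; exfalso.
  - rewrite <- h in b1. exact (a2 b b1 h').
  - rewrite h in a1. exact (b2 a a1 h').
Qed.

Definition limK (K : Type) (lt : K -> K -> Prop) (k0 : K) (l : K) : Prop :=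
  forall d, succK lt k0 d <> l.

Fixpoint iterK (K : Type) (s : K -> K) (n : nat) (l : K) : K :=
  match n with 0 => l | S n => s (iterK s n l) end.

Lemma decompK (K : Type) (lt : K -> K -> Prop) (HK : is_infinite_cardinal lt) k0 c :
  exists l n, limK lt k0 l /\ c = iterK (succK lt k0) n l.
Proof.
  pose proof (succK_spec HK k0) as sp. destruct HK as (irr & tr & tri & wf & _ & _).
  induction (wf c) as [c _ IH].
  destruct (classic (exists d, succK lt k0 d = c)) as [[d hd]|hn].
  - destruct (IH d) as [l [n [hl hn]]]. rewrite <- hd. apply sp.
    exists l, (S n). split; auto. simpl. congruence.
  - exists c, 0. split; auto. intros d hd. apply hn; eauto.
Qed.

Lemma uniqK (K : Type) (lt : K -> K -> Prop) (HK : is_infinite_cardinal lt) k0 :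
  forall n m l l', limK lt k0 l -> limK lt k0 l' ->
  iterK (succK lt k0) n l = iterK (succK lt k0) m l' -> n = m /\ l = l'.
Proof.
  induction n as [|n IH]; intros [|m] l l' hl hl' h; simpl in h.
  - auto.
  - exfalso. exact (hl _ (eq_sym h)).
  - exfalso. exact (hl' _ h).
  - apply (succK_inj HK) in h. destruct (IH m l l' hl hl' h). auto.
Qed.

Lemma even_dd k : Nat.even (k + k) = true /\ Nat.div2 (k + k) = k.
Proof.
  induction k as [|k IH]; simpl; auto. rewrite Nat.add_succ_r. simpl. destruct IH as [h1 h2].
  rewrite h1, h2. auto.
Qed.

Lemma odd_dd k : Nat.even (S (k + k)) = false /\ Nat.div2 (S (k + k)) = k.
Proof.
  induction k as [|k IH]; auto. destruct IH as [h1 h2].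
  replace (S (S k + S k)) with (S (S (S (k + k)))) by lia.
  change (Nat.even (S (k + k)) = false /\ S (Nat.div2 (S (k + k))) = S k).
  rewrite h1, h2. auto.
Qed.

Lemma schedule_exists (K : Type) (lt : K -> K -> Prop) (HK : is_infinite_cardinal lt) :
  exists s : K -> K + K, forall z, exists c, s c = z.
Proof.
  pose proof HK as HK'. destruct HK' as (irr & tr & tri & wf & [e einj] & seg).
  set (k0 := e 0).
  set (dec := fun c => epsilon (inhabits (k0, 0))
        (fun ln => limK lt k0 (fst ln) /\ c = iterK (succK lt k0) (snd ln) (fst ln))).
  assert (Hdec : forall c, limK lt k0 (fst (dec c)) /\ c = iterK (succK lt k0) (snd (dec c)) (fst (dec c))).
  { intro c. unfold dec. apply (epsilon_spec (inhabits (k0,0))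
        (fun ln => limK lt k0 (fst ln) /\ c = iterK (succK lt k0) (snd ln) (fst ln))).
    destruct (decompK HK k0 c) as [l [n h]]. exists (l, n). exact h. }
  exists (fun c => if Nat.even (snd (dec c)) then inl (iterK (succK lt k0) (Nat.div2 (snd (dec c))) (fst (dec c)))
           else inr (iterK (succK lt k0) (Nat.div2 (snd (dec c))) (fst (dec c)))).
  intros [t|t]; destruct (decompK HK k0 t) as [l [k [hl ht]]].
  - exists (iterK (succK lt k0) (k + k) l).
    destruct (Hdec (iterK (succK lt k0) (k + k) l)) as [h1 h2].
    destruct (uniqK HK _ _ hl h1 h2) as [E1 E2].
    rewrite <- E1, <- E2. destruct (even_dd k) as [-> ->]. congruence.
  - exists (iterK (succK lt k0) (S (k + k)) l).
    destruct (Hdec (iterK (succK lt k0) (S (k + k)) l)) as [h1 h2].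
    destruct (uniqK HK _ _ hl h1 h2) as [E1 E2].
    rewrite <- E1, <- E2. destruct (odd_dd k) as [-> ->]. congruence.
Qed.

Lemma PC_sub (I : Type) (ar : I -> nat) (X Y : Type)
  (RX : structure_rel ar X) (RY : structure_rel ar Y) (f g : X -> Y -> Prop) :
  is_PC RX RY f -> sub_rel g f -> is_PC RX RY g.
Proof.
  intros (h1 & h2 & h3) hs. split; [|split].
  - intros x y y' a b. eauto.
  - intros x x' y a b. eauto.
  - intros i xs ys hk. apply h3. intro k. apply hs. auto.
Qed.

Lemma fin_bound (K : Type) (lt : K -> K -> Prop) (k0 : K)
  (tri : forall a b, lt a b \/ a = b \/ lt b a) :
  forall n (Q : Fin.t n -> K -> Prop),
  (forall k a b, Q k a -> lt a b -> Q k b) ->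
  (forall k, exists a, Q k a) -> exists b, forall k, Q k b.
Proof.
  induction n as [|n IH]; intros Q mono hQ.
  - exists k0. intro k. apply Fin.case0. exact k.
  - destruct (IH (fun k => Q (Fin.FS k))) as [b' hb'].
    + intros k a b. apply mono.
    + intro k. apply hQ.
    + destruct (hQ Fin.F1) as [a ha].
      destruct (tri a b') as [h|[h|h]].
      * exists b'. intro k. apply (Fin.caseS' k); eauto.
      * subst. exists b'. intro k. apply (Fin.caseS' k); eauto.
      * exists a. intro k. apply (Fin.caseS' k); eauto.
Qed.

Lemma a_to_b (I : Type) (ar : I -> nat) (X Y K : Type)
  (RX : structure_rel ar X) (RY : structure_rel ar Y) (lt : K -> K -> Prop) :
  condenses RX RY -> exists Pi, is_bfs RX RY Pi /\ kappa_closed lt Pi.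
Proof.
  intros [f (pc & tot & sur)]. exists (fun g => g = f). split.
  - split; [eauto|split; [|split]].
    + intros g ->. exact pc.
    + intros g x ->. exists f. split; auto. split; [intros ? ? h; exact h| auto].
    + intros g y ->. exists f. split; auto. split; [intros ? ? h; exact h| auto].
  - intros g p hp _. exists f. split; auto. intros a ha. rewrite (hp a ha). intros ? ? h; exact h.
Qed.

Lemma a_to_c (I : Type) (ar : I -> nat) (X Y K : Type)
  (RX : structure_rel ar X) (RY : structure_rel ar Y) (lt : K -> K -> Prop) :
  condenses RX RY -> II_has_winning_strategy lt RX RY.
Proof.
  intros [f (pc & tot & sur)].
  exists (fun _ _ x => proj1_sig (constructive_indefinite_description _ (tot x))).
  exists (fun _ _ y => proj1_sig (constructive_indefinite_description _ (sur y))).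
  intros p hf. apply (PC_sub pc). intros x y [a [e1 e2]].
  specialize (hf a). revert hf e1 e2. destruct (p a) as [[x' y'] [|]]; simpl; intros hf e1 e2; subst x y.
  - rewrite hf. apply proj2_sig.
  - rewrite hf. apply proj2_sig.
Qed.

Lemma c_to_a (I : Type) (ar : I -> nat) (X Y K : Type)
  (RX : structure_rel ar X) (RY : structure_rel ar Y) (lt : K -> K -> Prop)
  (wf : well_founded lt) (sched : K -> X + Y) (hs : forall z, exists c, sched c = z) :
  II_has_winning_strategy lt RX RY -> condenses RX RY.
Proof.
  intros [sX [sY win]].
  set (F := fun a (rec : forall b, lt b a -> X * Y * bool) =>
    let h := fun b : {b : K | lt b a} => rec (proj1_sig b) (proj2_sig b) in
    match sched a with inl x => (x, sX a h x, true) | inr y => (sY a h y, y, false) end).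
  set (p := Fix wf (fun _ => (X * Y * bool)%type) F).
  assert (Hp : forall a, p a = F a (fun b _ => p b)).
  { intro a. unfold p. refine (Fix_eq wf (fun _ => (X * Y * bool)%type) F _ a). intros a' f g H.
    assert (f = g) as ->.
    { apply functional_extensionality_dep; intro b. apply functional_extensionality_dep; intro hb. apply H. }
    reflexivity. }
  assert (Hfol : follows lt sX sY p).
  { intro a. rewrite (Hp a). unfold F. destruct (sched a); reflexivity. }
  pose proof (win p Hfol) as pc.
  exists (play_rel p). split; [exact pc|split].
  - intro x. destruct (hs (inl x)) as [c hc]. exists (snd (fst (p c))). exists c.
    rewrite (Hp c). unfold F. rewrite hc. simpl. auto.
  - intro y. destruct (hs (inr y)) as [c hc]. exists (fst (fst (p c))). exists c.
    rewrite (Hp c). unfold F. rewrite hc. simpl. auto.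
Qed.

Lemma b_to_a (I : Type) (ar : I -> nat) (X Y K : Type)
  (RX : structure_rel ar X) (RY : structure_rel ar Y) (lt : K -> K -> Prop)
  (k0 : K) (tr : forall a b c, lt a b -> lt b c -> lt a c)
  (tri : forall a b, lt a b \/ a = b \/ lt b a)
  (wf : well_founded lt) (gX : K -> X) (gY : K -> Y)
  (hX : forall x, exists a, gX a = x) (hY : forall y, exists a, gY a = y) :
  (exists Pi, is_bfs RX RY Pi /\ kappa_closed lt Pi) -> condenses RX RY.
Proof.
  intros [Pi [(ne & pc & fx & fy) kc]].
  set (inh := inhabits (fun (_ : X) (_ : Y) => False)).
  set (up := fun a (rec : forall b, lt b a -> X -> Y -> Prop) =>
       epsilon inh (fun q => Pi q /\ forall b H, sub_rel (rec b H) q)).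
  set (e1 := fun q x => epsilon inh (fun g => Pi g /\ sub_rel q g /\ exists y, g x y)).
  set (e2 := fun q y => epsilon inh (fun g => Pi g /\ sub_rel q g /\ exists x, g x y)).
  set (F := fun a rec => e2 (e1 (up a rec) (gX a)) (gY a)).
  set (P := Fix wf (fun _ => X -> Y -> Prop) F).
  assert (HP : forall a, P a = F a (fun b _ => P b)).
  { intro a. unfold P. refine (Fix_eq wf (fun _ => X -> Y -> Prop) F _ a). intros a' f g H.
    assert (f = g) as ->.
    { apply functional_extensionality_dep; intro b. apply functional_extensionality_dep; intro hb. apply H. }
    reflexivity. }
  assert (He1 : forall q x, Pi q -> Pi (e1 q x) /\ sub_rel q (e1 q x) /\ exists y, e1 q x x y).
  { intros q x hq. unfold e1. apply (epsilon_spec inh (fun g => Pi g /\ sub_rel q g /\ exists y, g x y)).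
    apply fx; auto. }
  assert (He2 : forall q y, Pi q -> Pi (e2 q y) /\ sub_rel q (e2 q y) /\ exists x, e2 q y x y).
  { intros q y hq. unfold e2. apply (epsilon_spec inh (fun g => Pi g /\ sub_rel q g /\ exists x, g x y)).
    apply fy; auto. }
  assert (Key : forall a, Pi (P a) /\ (forall b, lt b a -> sub_rel (P b) (P a)) /\
                  (exists y, P a (gX a) y) /\ (exists x, P a x (gY a))).
  { intro a. induction (wf a) as [a _ IH].
    assert (U : Pi (up a (fun b _ => P b)) /\ forall b (H : lt b a), sub_rel (P b) (up a (fun b _ => P b))).
    { unfold up. apply (epsilon_spec inh (fun q => Pi q /\ forall b (H : lt b a), sub_rel (P b) q)).
      destruct (kc a P) as [q [hq1 hq2]].
      - intros b hb. apply (IH b hb).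
      - intros b c hbc hc. apply (IH c hc). exact hbc.
      - exists q. split; auto. }
    destruct U as [U1 U2].
    destruct (He1 _ (gX a) U1) as (A1 & A2 & A3).
    destruct (He2 _ (gY a) A1) as (B1 & B2 & B3).
    rewrite HP. unfold F. split; [exact B1|split; [|split]].
    - intros b hb x y h. apply B2, A2, (U2 b hb), h.
    - destruct A3 as [y hy]. exists y. apply B2, hy.
    - exact B3. }
  assert (Mono : forall a b, lt a b -> sub_rel (P a) (P b)).
  { intros a b h. apply (Key b). exact h. }
  assert (Join : forall a b, exists c, sub_rel (P a) (P c) /\ sub_rel (P b) (P c)).
  { intros a b. destruct (tri a b) as [h|[h|h]].
    - exists b. split; [apply Mono; auto| intros ? ? z; exact z].
    - subst. exists b. split; intros ? ? z; exact z.
    - exists a. split; [intros ? ? z; exact z|apply Mono; auto]. }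
  exists (fun x y => exists a, P a x y). split; [split; [|split]|split].
  - intros x y y' [a ha] [b hb]. destruct (Join a b) as [c [hc1 hc2]].
    destruct (Key c) as [hp _]. destruct (pc _ hp) as [f1 _]. eauto.
  - intros x x' y [a ha] [b hb]. destruct (Join a b) as [c [hc1 hc2]].
    destruct (Key c) as [hp _]. destruct (pc _ hp) as [_ [f2 _]]. eauto.
  - intros i xs ys hk hr.
    destruct (fin_bound lt k0 tri (fun k a => P a (xs k) (ys k))) as [b hb].
    + intros k a b h hab. apply (Mono a b hab). exact h.
    + exact hk.
    + destruct (Key b) as [hp _]. destruct (pc _ hp) as [_ [_ f3]]. eauto.
  - intro x. destruct (hX x) as [a <-]. destruct (Key a) as (_ & _ & [y hy] & _). eauto.
  - intro y. destruct (hY y) as [a <-]. destruct (Key a) as (_ & _ & _ & [x hx]). eauto.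
Qed.

Lemma surj_of_equi (A K : Type) : equinumerous A K -> exists g : K -> A, forall x, exists a, g a = x.
Proof.
  intros [f [finj fsur]].
  exists (fun a => proj1_sig (constructive_indefinite_description _ (fsur a))).
  intro x. exists (f x). apply finj. apply (proj2_sig (constructive_indefinite_description _ (fsur (f x)))).
Qed.

Lemma partI (I : Type) (ar : I -> nat) (X Y K : Type)
  (RX : structure_rel ar X) (RY : structure_rel ar Y) (lt : K -> K -> Prop) :
  is_infinite_cardinal lt -> equinumerous X K -> equinumerous Y K ->
  ((condenses RX RY <->
      exists Pi, is_bfs RX RY Pi /\ kappa_closed lt Pi) /\
   ((exists Pi, is_bfs RX RY Pi /\ kappa_closed lt Pi) <->
      II_has_winning_strategy lt RX RY)).
Proof.
  intros HK eX eY.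
  destruct (schedule_exists HK) as [s hs].
  destruct HK as (irr & tr & tri & wf & [e einj] & seg).
  destruct (surj_of_equi eX) as [gX hX]. destruct (surj_of_equi eY) as [gY hY].
  set (sch := fun c => match s c with inl t => inl (gX t) | inr t => inr (gY t) end).
  assert (hsch : forall z, exists c, sch c = z).
  { intros [x|y].
    - destruct (hX x) as [t <-]. destruct (hs (inl t)) as [c hc]. exists c. unfold sch. rewrite hc. auto.
    - destruct (hY y) as [t <-]. destruct (hs (inr t)) as [c hc]. exists c. unfold sch. rewrite hc. auto. }
  pose proof (@b_to_a I ar X Y K RX RY lt (e 0) tr tri wf gX gY hX hY) as BA.
  pose proof (@c_to_a I ar X Y K RX RY lt wf sch hsch) as CA.
  split; split; intro h.
  - apply a_to_b; auto.
  - apply BA; auto.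
  - apply a_to_c. apply BA; auto.
  - apply a_to_b. apply CA; auto.
Qed.

Theorem theorem3p1 (I : Type) (ar : I -> nat) (X Y K : Type)
  (RX : structure_rel ar X) (RY : structure_rel ar Y) (lt : K -> K -> Prop) :
  is_infinite_cardinal lt -> equinumerous X K -> equinumerous Y K ->
  (* (I) *)
  ((condenses RX RY <->
      exists Pi, is_bfs RX RY Pi /\ kappa_closed lt Pi) /\
   ((exists Pi, is_bfs RX RY Pi /\ kappa_closed lt Pi) <->
      II_has_winning_strategy lt RX RY)) /\
  (* (II) *)
  ((cond_equiv RX RY <->
      (exists PiXY, is_bfs RX RY PiXY /\ kappa_closed lt PiXY) /\
      (exists PiYX, is_bfs RY RX PiYX /\ kappa_closed lt PiYX)) /\
   ((exists PiXY, is_bfs RX RY PiXY /\ kappa_closed lt PiXY) /\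
    (exists PiYX, is_bfs RY RX PiYX /\ kappa_closed lt PiYX) <->
      II_has_winning_strategy lt RX RY /\ II_has_winning_strategy lt RY RX)).
Proof.
  intros HK eX eY.
  destruct (@partI I ar X Y K RX RY lt HK eX eY) as [[A1 A2] [B1 B2]].
  destruct (@partI I ar Y X K RY RX lt HK eY eX) as [[C1 C2] [D1 D2]].
  split; [split; split; auto|].
  unfold cond_equiv. split; split; intros [h1 h2]; split; auto.
Qed.
Print Assumptions theorem3p1.
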